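(* Let $n\ge 2$, $\gamma_1,\dots,\gamma_n>0$, and let $\mathcal{I}\subseteq\{1,\dots,n\}$. For $i\in\mathcal{I}$, let $H_i$ be a dynamic system $\dot x_i=f_i(x_i,u_i)$, $y_i=h_i(x_i)$ ($x_i\in\mathbb{R}^{m_i}$, $u_i,y_i\in\mathbb{R}$) with a $C^1$ function $V_i$ satisfying $\nabla V_i(x_i)\cdot f_i(x_i,u_i)\le -h_i(x_i)^2+\gamma_iu_ih_i(x_i)$ for all $x_i,u_i$. For $i\notin\mathcal{I}$, let $H_i$ be a static (possibly time-varying) map $y_i=\phi_i(t,u_i)$ satisfying $0\le -y_i^2+\gamma_iu_iy_i$ for all $t,u_i$. Consider the interconnection $u_1=-y_n$, $u_i=y_{i-1}$ ($i=2,\dots,n$), $y=(y_1,\dots,y_n)$, and suppose the resulting closed loop is well-defined. If $\cos(\pi/n)(\gamma_1\cdots\gamma_n)^{1/n}<1$, then there exist $d_i>0$ ($i\in\mathcal{I}$) and $\epsilon>0$ such that $V=\sum_{i\in\mathcal{I}}d_iV_i$ satisfies $\dot V\le-\epsilon|y|^2$ along the closed-loop dynamics. *)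

(* Defs.v *)
From HB Require Import structures.
From mathcomp Require Import all_boot all_order all_algebra.
From mathcomp Require Import all_classical all_reals all_analysis.
Set Implicit Arguments. Unset Strict Implicit. Unset Printing Implicit Defensive.
Import Order.TTheory GRing.Theory Num.Theory.
Import numFieldNormedType.Exports.
Local Open Scope ring_scope.

(* Subsystems are indexed by 'I_n = {0,...,n-1} (paper index i+1).
   Interconnection: u_1 = - y_n, u_i = y_(i-1) (i = 2..n).
   ord_pred i is the cyclic predecessor of i in 'I_n (ord_pred 0 = n-1). *)
Definition loop_input {R : ringType} {n : nat} (y : 'I_n -> R) (i : 'I_n) : R :=
  if (i : nat) == 0%N then - y (ord_pred i) else y (ord_pred i).

Definition closed_loop {R : realType} {n : nat} (I : {set 'I_n}) (m : 'I_n -> nat)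
    (h : forall i, 'rV[R]_(m i) -> R) (phi : 'I_n -> R -> R -> R)
    (t : R) (x : forall i, 'rV[R]_(m i)) (y : 'I_n -> R) : Prop :=
  forall i : 'I_n,
    (i \in I -> y i = h i (x i)) /\ (i \notin I -> y i = phi i t (loop_input y i)).

(* Main.v *)
Require Import Defs.
From HB Require Import structures.
From mathcomp Require Import all_boot all_order all_algebra.
From mathcomp Require Import all_classical all_reals all_analysis.
From mathcomp Require Import ring lra.
Import Order.TTheory GRing.Theory Num.Theory.
Import numFieldNormedType.Exports.
Local Open Scope ring_scope.


Lemma cs_sum (R : realFieldType) (N : nat) (p x : nat -> R) :
  (forall j : 'I_N, 0 < p j) ->
  (\sum_(j < N) x j) ^+ 2 <= (\sum_(j < N) (p j)^-1) * \sum_(j < N) p j * x j ^+ 2.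
Proof.
move=> hp.
case: N hp => [|N] hp; first by rewrite !big_ord0 expr0n /= mul0r.
set X := \sum_(j < _) x j; set P := \sum_(j < _) (p j)^-1.
have hP : 0 < P.
  rewrite /P (bigD1 ord0) //=.
  have h1 : 0 < (p (@ord0 N))^-1 by rewrite invr_gt0.
  have h2 : 0 <= \sum_(i < N.+1 | i != ord0) (p i)^-1.
    by apply: sumr_ge0 => i _; rewrite invr_ge0; apply: ltW.
  lra.
have h0 : 0 <= \sum_(j < N.+1) p j * (x j - X / (P * p j)) ^+ 2.
  by apply: sumr_ge0 => i _; apply: mulr_ge0; [exact: ltW | exact: sqr_ge0].
have e : \sum_(j < N.+1) p j * (x j - X / (P * p j)) ^+ 2 =
   \sum_(j < N.+1) p j * x j ^+ 2 - 2 * (X / P) * X + (X / P) ^+ 2 * P.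
  rewrite /X /P mulr_sumr mulr_sumr -sumrN -!big_split /=.
  apply: eq_bigr => i _.
  have := hp i; rewrite lt0r => /andP[pi0 _].
  have Pn : P != 0 by rewrite gt_eqF.
  rewrite -/X -/P. field. by rewrite Pn pi0.
rewrite e in h0.
have : 0 <= (\sum_(j < N.+1) p j * x j ^+ 2) * P - X ^+ 2.
  have : 0 <= (\sum_(j < N.+1) p j * x j ^+ 2 - 2 * (X / P) * X + (X / P) ^+ 2 * P) * P.
    by apply: mulr_ge0 => //; exact: ltW.
  suff -> : (\sum_(j < N.+1) p j * x j ^+ 2 - 2 * (X / P) * X + (X / P) ^+ 2 * P) * P
     = (\sum_(j < N.+1) p j * x j ^+ 2) * P - X ^+ 2 by [].
  field; by rewrite gt_eqF.
by rewrite subr_ge0 mulrC.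
Qed.

Lemma core_w (R : realFieldType) (N : nat) (c : R) (s w : nat -> R) :
  (forall j, (j <= N)%N -> 0 < s j) ->
  (forall j, (j <= N)%N ->
     s j * ((if j == 0%N then - s N else s j.-1) + (if j == N then - s 0%N else s j.+1))
       <= 2 * c * s j ^+ 2) ->
  s 0%N * s N * \sum_(j < N) (s j * s j.+1)^-1 <= 1 ->
  \sum_(j < N) s j * s j.+1 * w j * w j.+1 - s N * s 0%N * w N * w 0%N
    <= c * \sum_(j < N.+1) s j ^+ 2 * w j ^+ 2.
Proof.
move=> hs hE hT.
have hp : forall j : 'I_N, 0 < s j * s j.+1.
  move=> j; apply: mulr_gt0; apply: hs; [exact: ltnW | exact: ltn_ord].
set sm := fun j : nat => if j == 0%N then - s N else s j.-1.
set sp := fun j : nat => if j == N then - s 0%N else s j.+1.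
have st1 : \sum_(j < N.+1) s j * (sm j + sp j) * w j ^+ 2
    <= 2 * c * \sum_(j < N.+1) s j ^+ 2 * w j ^+ 2.
  rewrite mulr_sumr; apply: ler_sum => j _.
  rewrite mulrA; apply: ler_wpM2r; first exact: sqr_ge0.
  exact: hE (ltn_ord j).
have st2 : \sum_(j < N.+1) s j * (sm j + sp j) * w j ^+ 2 =
   \sum_(j < N) s j * s j.+1 * (w j ^+ 2 + w j.+1 ^+ 2)
   - s 0%N * s N * (w 0%N ^+ 2 + w N ^+ 2).
  have -> : \sum_(j < N.+1) s j * (sm j + sp j) * w j ^+ 2 =
     \sum_(j < N.+1) s j * sm j * w j ^+ 2 + \sum_(j < N.+1) s j * sp j * w j ^+ 2.
    by rewrite -big_split /=; apply: eq_bigr => j _; ring.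
  rewrite big_ord_recl big_ord_recr /= /sm /sp /=.
  have e1 : \sum_(i < N) s (bump 0 i) * s (0 + i)%N * w (bump 0 i) ^+ 2
     = \sum_(i < N) s i * s i.+1 * w i.+1 ^+ 2.
    by apply: eq_bigr => i _; rewrite /bump /= add1n add0n (mulrC (s i.+1) (s i)).
  have e2 : \sum_(i < N) s i * (if i == N :> nat then - s 0%N else s i.+1) * w i ^+ 2
     = \sum_(i < N) s i * s i.+1 * w i ^+ 2.
    by apply: eq_bigr => i _; rewrite ltn_eqF.
  rewrite e1 e2 eqxx.
  have e3 : \sum_(j < N) s j * s j.+1 * (w j ^+ 2 + w j.+1 ^+ 2) =
    \sum_(i < N) s i * s i.+1 * w i ^+ 2 + \sum_(i < N) s i * s i.+1 * w i.+1 ^+ 2.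
    by rewrite -big_split /=; apply: eq_bigr => i _; rewrite mulrDr.
  rewrite e3. ring.
have st3 : \sum_(j < N) s j * s j.+1 * (w j ^+ 2 + w j.+1 ^+ 2)
    - 2 * \sum_(j < N) s j * s j.+1 * w j * w j.+1
    = \sum_(j < N) s j * s j.+1 * (w j - w j.+1) ^+ 2.
  rewrite mulr_sumr -sumrN -big_split /=; apply: eq_bigr => j _; ring.
have st4 : (w 0%N - w N) ^+ 2 <= (\sum_(j < N) (s j * s j.+1)^-1) *
      \sum_(j < N) s j * s j.+1 * (w j - w j.+1) ^+ 2.
  have <- : \sum_(j < N) (w j - w j.+1) = w 0%N - w N.
    rewrite -(big_mkord xpredT (fun j => w j - w j.+1)).
    rewrite (telescope_sumr_eq (fun k => - w k)) //; first by rewrite opprK addrC.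
    by move=> k _; rewrite opprK addrC.
  exact: (@cs_sum _ _ (fun j => s j * s j.+1) (fun j => w j - w j.+1) hp).
have Dge0 : 0 <= \sum_(j < N) s j * s j.+1 * (w j - w j.+1) ^+ 2.
  by apply: sumr_ge0 => j _; apply: mulr_ge0; [exact: ltW | exact: sqr_ge0].
have s0N : 0 < s 0%N * s N by apply: mulr_gt0; apply: hs.
have st5 : s 0%N * s N * (w 0%N - w N) ^+ 2 <= \sum_(j < N) s j * s j.+1 * (w j - w j.+1) ^+ 2.
  apply: le_trans (ler_wpM2l (ltW s0N) st4) _.
  rewrite mulrA; apply: ler_piMl => //.
set D := \sum_(j < N) s j * s j.+1 * (w j - w j.+1) ^+ 2 in st3 st4 st5 Dge0.
set A := \sum_(j < N) s j * s j.+1 * w j * w j.+1 in st3 *.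
set B := \sum_(j < N) s j * s j.+1 * (w j ^+ 2 + w j.+1 ^+ 2) in st2 st3.
set C := \sum_(j < N.+1) s j ^+ 2 * w j ^+ 2 in st1 *.
set E := \sum_(j < N.+1) s j * (sm j + sp j) * w j ^+ 2 in st1 st2.
have : s 0%N * s N * (w 0%N - w N) ^+ 2 = s 0%N * s N * (w 0%N ^+ 2 + w N ^+ 2) - 2 * (s N * s 0%N * w N * w 0%N) by ring.
move: (s 0%N * s N * (w 0%N - w N) ^+ 2) st5 => q st5 eq.
move: (s 0%N * s N * (w 0%N ^+ 2 + w N ^+ 2)) st2 eq => q2 st2 eq.
move: (s N * s 0%N * w N * w 0%N) eq => q3 eq.
lra.
Qed.

Section Trig.
Variable R : realType.
Variable N : nat.
Hypothesis hN : (0 < N)%N.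
Let th : R := pi / N.+1%:R.
Let a (x : R) : R := (x + 2^-1) * th.
Let S (x : R) : R := sin (a x).

Lemma th_gt0 : 0 < th.
Proof. by rewrite /th divr_gt0 // pi_gt0. Qed.

Lemma aN : a N%:R = pi - th / 2.
Proof. rewrite /a /th -natr1. field. by rewrite nat1r pnatr_eq0. Qed.

Lemma th_lt : th < pi.
Proof.
rewrite /th ltr_pdivrMr ?ltr0n // ltr_pMr ?pi_gt0 //.
by rewrite ltr1n ltnS.
Qed.

Lemma S_pos (j : nat) : (j <= N)%N -> 0 < S j%:R.
Proof.
move=> hj; apply: sin_gt0_pi; apply/andP; split.
  by rewrite /a mulr_gt0 ?th_gt0 // ltr_wpDl // invr_gt0.
have : a j%:R <= a N%:R.
  by rewrite /a ler_wpM2r ?(ltW th_gt0) // lerD2r ler_nat.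
rewrite aN => h; apply: le_lt_trans h _.
by rewrite ltrBlDr ltrDl divr_gt0 ?th_gt0.
Qed.

Lemma S_rec (x : R) : S (x - 1) + S (x + 1) = 2 * cos th * S x.
Proof.
rewrite /S /a.
have -> : (x - 1 + 2^-1) * th = (x + 2^-1) * th - th by ring.
have -> : (x + 1 + 2^-1) * th = (x + 2^-1) * th + th by ring.
rewrite sinB sinD; ring.
Qed.

Lemma sin_pimx (x : R) : sin (pi - x) = sin x.
Proof. by rewrite sinB sinpi cospi; ring. Qed.
Lemma cos_pimx (x : R) : cos (pi - x) = - cos x.
Proof. by rewrite cosB sinpi cospi; ring. Qed.
Lemma sin_pipx (x : R) : sin (pi + x) = - sin x.
Proof. by rewrite sinD sinpi cospi; ring. Qed.

Lemma SN : S N%:R = sin (th / 2).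
Proof. by rewrite /S aN sin_pimx. Qed.
Lemma S0 : S 0 = sin (th / 2).
Proof. rewrite /S /a; congr sin; ring. Qed.
Lemma Sm1 : S (0 - 1) = - S N%:R.
Proof.
rewrite SN /S /a -sinN; congr sin; by field.
Qed.
Lemma SN1 : S (N%:R + 1) = - S 0.
Proof.
rewrite S0 /S -sin_pipx; congr sin.
have := aN; rewrite /a => e.
have -> : (N%:R + 1 + 2^-1) * th = (N%:R + 2^-1) * th + th by ring.
rewrite e; by field.
Qed.

Lemma sinh_gt0 : 0 < sin (th / 2).
Proof.
apply: sin_gt0_pi; apply/andP; split; first by rewrite divr_gt0 ?th_gt0.
apply: lt_trans th_lt; rewrite ltr_pdivrMr // ltr_pMr ?th_gt0 //.
by rewrite ltr1n.
Qed.

Lemma sinth : sin th = 2 * sin (th / 2) * cos (th / 2).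
Proof.
have -> : th = th / 2 + th / 2 by field.
rewrite sinD. have -> : (th / 2 + th / 2) / 2 = th / 2 by field. ring.
Qed.

Lemma sinth_gt0 : 0 < sin th.
Proof. by apply: sin_gt0_pi; rewrite th_gt0 th_lt. Qed.

Let C (x : R) : R := cos (a x) / sin (a x).

Lemma inv_SS (j : nat) : (j < N)%N ->
  (S j%:R * S j.+1%:R)^-1 = (C j%:R - C j.+1%:R) / sin th.
Proof.
move=> hj.
have h1 := @S_pos j (ltnW hj). have h2 := @S_pos j.+1 hj.
have h3 := sinth_gt0.
have e : sin th = sin (a j.+1%:R) * cos (a j%:R) - cos (a j.+1%:R) * sin (a j%:R).
  rewrite -sinB; congr sin; rewrite /a -natr1; ring.
rewrite /C e. move: h1 h2 h3; rewrite e /S => h1 h2 h3.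
field. by rewrite !gt_eqF.
Qed.

Lemma trig_T : S 0 * S N%:R * \sum_(j < N) (S j%:R * S j.+1%:R)^-1 = 1.
Proof.
have -> : \sum_(j < N) (S j%:R * S j.+1%:R)^-1 = \sum_(j < N) (C j%:R - C j.+1%:R) / sin th.
  by apply: eq_bigr => j _; rewrite inv_SS.
rewrite -mulr_suml.
rewrite -(big_mkord xpredT (fun j => C j%:R - C j.+1%:R)).
rewrite (telescope_sumr_eq (fun k => - C k%:R)) //; last first.
  by move=> k _; rewrite opprK addrC.
rewrite opprK [- _ + _]addrC.
have eC0 : C 0%:R = cos (th / 2) / sin (th / 2).
  by rewrite /C /a; have -> : (0%:R + 2^-1) * th = th / 2 by ring.
have eCN : C N%:R = - cos (th / 2) / sin (th / 2).
  by rewrite /C aN sin_pimx cos_pimx.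
rewrite eC0 eCN S0 SN sinth.
have := sinh_gt0; have := sinth_gt0; rewrite sinth => h1 h2.
have h3 : cos (th / 2) != 0.
  apply/negP => /eqP e; move: h1; rewrite e mulr0 ltxx //.
field. by rewrite h3 gt_eqF.
Qed.


Lemma S_hE (j : nat) : (j <= N)%N ->
  S j%:R * ((if j == 0%N then - S N%:R else S j.-1%:R) +
            (if j == N then - S 0%:R else S j.+1%:R)) <= 2 * cos th * S j%:R ^+ 2.
Proof.
move=> hj.
suff -> : (if j == 0%N then - S N%:R else S j.-1%:R) +
            (if j == N then - S 0%:R else S j.+1%:R) = 2 * cos th * S j%:R.
  by rewrite le_eqVlt; apply/orP; left; apply/eqP; ring.
rewrite -S_rec.
case: j hj => [|k] hk /=.
  rewrite (ltn_eqF hN) -Sm1; congr (S _ + S _); by rewrite add0r.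
have -> : (k.+1%:R - 1 : R) = k%:R by rewrite -natr1 addrK.
case: eqP => [e | _]; last by rewrite natr1.
by rewrite e SN1.
Qed.

Lemma anticycle (z : nat -> R) :
  \sum_(j < N) z j * z j.+1 - z N * z 0%N <= cos th * \sum_(j < N.+1) z j ^+ 2.
Proof.
pose s j := S j%:R.
pose w j := z j / s j.
have hs : forall j, (j <= N)%N -> 0 < s j by move=> j hj; exact: S_pos.
have ez : forall j, (j <= N)%N -> s j * w j = z j.
  move=> j hj; have h := hs j hj; by rewrite /w mulrC -mulrA mulVf ?mulr1 // gt_eqF.
have := @core_w R N (cos th) s w hs S_hE.
rewrite /s trig_T lexx => /(_ isT).
have -> : \sum_(j < N) S j%:R * S j.+1%:R * w j * w j.+1 = \sum_(j < N) z j * z j.+1.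
  apply: eq_bigr => j _; rewrite -(ez j) ?(ltnW (ltn_ord j)) // -(ez j.+1) ?(ltn_ord j) //.
  rewrite /s; ring.
have -> : \sum_(j < N.+1) S j%:R ^+ 2 * w j ^+ 2 = \sum_(j < N.+1) z j ^+ 2.
  apply: eq_bigr => j _; rewrite -(ez j); last exact: (ltn_ord j).
  have sq : forall x y : R, x ^+ 2 * y ^+ 2 = (x * y) ^+ 2 by move=> x y; rewrite exprMn.
  exact: sq.
rewrite -(ez N) // -(ez 0%N) // /s.
have -> : S N%:R * S 0%:R * w N * w 0%N = S N%:R * w N * (S 0%:R * w 0%N) by ring.
by [].
Qed.

End Trig.


Lemma loop_inputE (R : ringType) (N : nat) (y : 'I_N.+1 -> R) (i : 'I_N.+1) :
  loop_input y i = if (i : nat) == 0%N then - y (inord N) else y (inord i.-1).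
Proof.
rewrite /loop_input; case: i => [[|k] hk] /=.
  congr (- y _); apply: val_inj; rewrite /= inordK //= modn_small //.
congr (y _); apply: val_inj; rewrite /= inordK; last by apply: ltnW.
by rewrite modnDr modn_small // ltnW.
Qed.

Lemma sum_recl_nat (R : zmodType) N (F : nat -> R) :
  \sum_(i < N.+1) F i = F 0%N + \sum_(i < N) F i.+1.
Proof. exact: big_ord_recl. Qed.

Fixpoint scal (R : fieldType) (G : nat -> R) (g : R) (j : nat) : R :=
  if j is k.+1 then scal R G g k * G k.+1 / g else 1.
Arguments scal {R}.

Lemma quad (R : realType) (N : nat) (hN : (0 < N)%N) (gamma : 'I_N.+1 -> R)
  (hg : forall i, 0 < gamma i)
  (hgain : cos (pi / N.+1%:R) * powR (\prod_(i < N.+1) gamma i) (N.+1%:R^-1) < 1) :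
  exists d : 'I_N.+1 -> R, (forall i, 0 < d i) /\
  exists eps : R, 0 < eps /\ forall y : 'I_N.+1 -> R,
    \sum_(i < N.+1) d i * (- y i ^+ 2 + gamma i * loop_input y i * y i)
      <= - eps * \sum_(i < N.+1) y i ^+ 2.
Proof.
set P := \prod_(i < N.+1) gamma i.
set g := powR P (N.+1%:R^-1).
have hP : 0 < P by apply: prodr_gt0 => i _.
have hg0 : 0 < g by apply: powR_gt0.
have gn : g ^+ N.+1 = P.
  rewrite -powR_mulrn; last exact: ltW.
  rewrite -powRrM mulVf; last by rewrite pnatr_eq0.
  by rewrite powRr1 // ltW.
pose G j := gamma (inord j).
have hG : forall j, 0 < G j by move=> j; apply: hg.
pose a := scal G g.
have apos : forall j, 0 < a j.
  elim=> [|k IH] /=; first exact: ltr01.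
  by rewrite /a /= divr_gt0 // mulr_gt0.
have arec : forall k, G k.+1 * a k = g * a k.+1.
  move=> k; rewrite /a /=; field; by rewrite gt_eqF.
have aprod : forall j, a j = (\prod_(1 <= k < j.+1) G k) / g ^+ j.
  elim=> [|k IH]; first by rewrite /a /= big_geq // expr0 divr1.
  rewrite /a /= -/a IH [in RHS]big_nat_recr //= exprS.
  field; by rewrite expf_neq0 ?gt_eqF.
have awrap : G 0%N * a N = g.
  rewrite aprod mulrA -big_ltn // big_mkord.
  have -> : \prod_(i < N.+1) G i = P.
    by apply: eq_bigr => i _; rewrite /G inord_val.
  rewrite -gn exprS; field; by rewrite expf_neq0 ?gt_eqF.
pose M := \sum_(j < N.+1) a j ^+ 2.
have aleM : forall j : 'I_N.+1, a j ^+ 2 <= M.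
  move=> j; rewrite /M (bigD1 j) //= lerDl; apply: sumr_ge0 => i _; exact: sqr_ge0.
have hM : 0 < M by apply: lt_le_trans (aleM ord0); rewrite exprn_gt0.
exists (fun i => (a i ^+ 2)^-1); split.
  by move=> i; rewrite invr_gt0 exprn_gt0.
exists ((1 - cos (pi / N.+1%:R) * g) / M); split.
  by rewrite divr_gt0 // subr_gt0.
move=> y.
pose Y j := y (inord j).
pose z j := Y j / a j.
have step1 : \sum_(i < N.+1) (a i ^+ 2)^-1 * (- y i ^+ 2 + gamma i * loop_input y i * y i)
   = \sum_(i < N.+1) (- z i ^+ 2 + g * (if (i : nat) == 0%N then - (z N * z 0%N) else z i.-1 * z i)).
  apply: eq_bigr => i _; rewrite loop_inputE.
  have yi : y i = Y i by rewrite /Y inord_val.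
  have gi : gamma i = G i by rewrite /G inord_val.
  rewrite yi gi /z; clear yi gi; case: i => [[|k] hk] /=.
    rewrite -awrap.
    have a0 : a 0%N = 1 by [].
    rewrite a0; have := apos N; move=> aN.
    rewrite /Y; field; by rewrite gt_eqF.
  have eg : g = G k.+1 * a k / a k.+1.
    rewrite arec; field; by rewrite gt_eqF.
  rewrite eg; have := apos k; have := apos k.+1 => h1 h2.
  rewrite /Y; move: (a k) (a k.+1) h2 h1 => p q hp hq.
  field; by rewrite !gt_eqF.
have step2 : \sum_(i < N.+1) (- z i ^+ 2 + g * (if (i : nat) == 0%N then - (z N * z 0%N) else z i.-1 * z i))
   = - \sum_(i < N.+1) z i ^+ 2 + g * (\sum_(j < N) z j * z j.+1 - z N * z 0%N).
  rewrite (@sum_recl_nat _ _ (fun i => - z i ^+ 2 + g * (if i == 0%N then - (z N * z 0%N) else z i.-1 * z i))).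
  rewrite (@sum_recl_nat _ _ (fun i => z i ^+ 2)) /=.
  rewrite big_split /= sumrN -mulr_sumr.
  ring.
have step3 := @anticycle R N hN z.
have hgain2 : cos (pi / N.+1%:R) * g < 1 by [].
have step4 : (\sum_(i < N.+1) y i ^+ 2) / M <= \sum_(i < N.+1) z i ^+ 2.
  rewrite mulr_suml; apply: ler_sum => i _.
  have yi : y i = Y i by rewrite /Y inord_val.
  rewrite yi /z expr_div_n; apply: ler_wpM2l; first exact: sqr_ge0.
  rewrite lef_pV2 ?aleM // posrE ?exprn_gt0 //.
rewrite step1 step2.
set T := \sum_(i < N.+1) z i ^+ 2 in step3 step4 *.
set Q := \sum_(j < N) z j * z j.+1 - z N * z 0%N in step3 *.
set S := \sum_(i < N.+1) y i ^+ 2 in step4 *.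
set c := cos (pi / N.+1%:R) in hgain2 step3 *.
have h1 : g * Q <= g * (c * T) by apply: ler_wpM2l => //; exact: ltW.
have hcg : 0 <= 1 - c * g by rewrite subr_ge0 ltW.
have h2 : (1 - c * g) * (S / M) <= (1 - c * g) * T by apply: ler_wpM2l.
have -> : - ((1 - c * g) / M) * S = - ((1 - c * g) * (S / M)) by rewrite mulrA mulNr mulrAC.
have e3 : g * (c * T) = (c * g) * T by ring.
have e4 : (1 - c * g) * T = T - (c * g) * T by ring.
lra.
Qed.

Theorem mainTheorem4 (R : realType) (n : nat) (hn : (2 <= n)%N)
  (gamma : 'I_n -> R) (hgamma : forall i, 0 < gamma i)
  (I : {set 'I_n}) (m : 'I_n -> nat)
  (f : forall i, 'rV[R]_(m i) -> R -> 'rV[R]_(m i))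
  (h : forall i, 'rV[R]_(m i) -> R)
  (V : forall i, 'rV[R]_(m i) -> R)
  (phi : 'I_n -> R -> R -> R)
  (* V_i is C^1 for i in I *)
  (hVd : forall i, i \in I -> forall x, differentiable (V i) x)
  (hVc : forall i, i \in I -> forall v, continuous (fun x => 'D_v (V i) x))
  (* dissipation inequality for the dynamic subsystems *)
  (hdiss : forall i, i \in I -> forall (x : 'rV[R]_(m i)) (u : R),
      'D_(f i x u) (V i) x <= - (h i x) ^+ 2 + gamma i * u * h i x)
  (* sector condition for the static subsystems *)
  (hstat : forall i, i \notin I -> forall (t u : R),
      0 <= - (phi i t u) ^+ 2 + gamma i * u * phi i t u)
  (hgain : cos (pi / n%:R) * powR (\prod_(i < n) gamma i) (n%:R^-1) < 1) :
  exists d : 'I_n -> R, (forall i, i \in I -> 0 < d i) /\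
  exists eps : R, 0 < eps /\
    forall (t : R) (x : forall i, 'rV[R]_(m i)) (y : 'I_n -> R),
      closed_loop I h phi t x y ->
      \sum_(i in I) d i * 'D_(f i (x i) (loop_input y i)) (V i) (x i)
        <= - eps * \sum_(i < n) y i ^+ 2.
Proof.
have [N eN] : exists N, n = N.+1 by exists n.-1; rewrite prednK // ltnW.
subst n.
have hN : (0 < N)%N by [].
have [d [dpos [eps [epos H]]]] := @quad R N hN gamma hgamma hgain.
exists d; split; first by move=> i _; apply: dpos.
exists eps; split => // t x y cl.
apply: le_trans (H y).
rewrite [X in _ <= X](bigID (fun i => i \in I)) /=.
have h2 : 0 <= \sum_(i < N.+1 | i \notin I) d i * (- y i ^+ 2 + gamma i * loop_input y i * y i).
  apply: sumr_ge0 => i hi; apply: mulr_ge0; first exact: ltW.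
  have e := (cl i).2 hi.
  by rewrite e; apply: hstat.
have h1 : \sum_(i in I) d i * 'D_(f i (x i) (loop_input y i)) (V i) (x i)
   <= \sum_(i < N.+1 | i \in I) d i * (- y i ^+ 2 + gamma i * loop_input y i * y i).
  apply: ler_sum => i hi; apply: ler_wpM2l; first exact: ltW.
  have e := (cl i).1 hi.
  by rewrite e; apply: hdiss.
apply: le_trans h1 _.
by rewrite lerDl.
Qed.
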